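(* Let $G=(V,W,E)$ be an odd bipartite graph with parts $V$ and $W$. Then there is some $V'\subseteq V$ with $|V'|\leq |W|$ such that the induced subgraph $G[V'\cup W]$ (with parts $V'$ and $W$) is odd.
   Context: A bipartite graph $G=(V,W,E)$ (with distinguished parts $V$, $W$) is called odd if for every nonempty $X\subseteq W$ there is some $v\in V$ such that $|X\cap N(v)|$ is odd, where $N(v)$ is the neighbourhood of $v$. *)

(* Defs.v *)
From mathcomp Require Import all_boot.
Set Implicit Arguments. Unset Strict Implicit. Unset Printing Implicit Defensive.

Definition nbhd (V W : finType) (e : V -> W -> bool) (v : V) : {set W} :=
  [set w | e v w].

(* The bipartite graph with parts Vs ⊆ V and W, edges e restricted to Vs × W
   (i.e. the induced subgraph G[Vs ∪ W]) is odd: every nonempty X ⊆ W has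
   some v ∈ Vs with |X ∩ N(v)| odd.  Note N(v) ⊆ W is unchanged by
   restricting the left part. *)
Definition odd_on (V W : finType) (e : V -> W -> bool) (Vs : {set V}) : Prop :=
  forall X : {set W}, X != set0 ->
    exists2 v : V, v \in Vs & odd #|X :&: nbhd e v|.

Definition odd_bigraph (V W : finType) (e : V -> W -> bool) : Prop :=
  odd_on e [set: V].

(* Main.v *)
Require Import Defs.
From mathcomp Require Import all_boot.

Lemma card_setsW (W : finType) : #|{set W}| = 2 ^ #|W|.
Proof.
rewrite -cardsT -(card_powerset [set: W]).
apply: eq_card => X; rewrite !inE ?powersetE ?subsetT //; by rewrite unfold_in powersetE subsetT.
Qed.

Lemma even_sum (I : finType) (P : pred I) (F : I -> nat) :
  (forall i, P i -> ~~ odd (F i)) -> ~~ odd (\sum_(i | P i) F i).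
Proof.
move=> H; apply: (big_ind (fun n => ~~ odd n)) => //.
by move=> x y /negbTE hx /negbTE hy; rewrite oddD hx hy.
Qed.

Section S.
Variables (V W : finType) (e : V -> W -> bool).

Definition sigw (A : {set V}) : {set W} :=
  [set w | odd #|[set v in A | e v w]|].

Lemma cardIN (X : {set W}) v : #|X :&: nbhd e v| = \sum_(w in X) (e v w : nat).
Proof.
rewrite -sum1_card big_mkcond /= [RHS]big_mkcond /=.
apply: eq_bigr => w _; rewrite !inE; by case: (w \in X); case: (e v w).
Qed.

Lemma cardDw (D : {set V}) w : #|[set v in D | e v w]| = \sum_(v in D) (e v w : nat).
Proof.
rewrite -sum1_card big_mkcond /= [RHS]big_mkcond /=.
apply: eq_bigr => v _; rewrite !inE; by case: (v \in D); case: (e v w).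
Qed.

Lemma step (Vs : {set V}) : #|W| < #|Vs| -> odd_on e Vs ->
  exists2 v0, v0 \in Vs & odd_on e (Vs :\ v0).
Proof.
move=> hlt hodd.
have : ~~ dinjectiveb sigw (mem (powerset Vs)).
  apply/negP => /dinjectiveP hinj.
  have := @leq_card_in _ _ sigw _ hinj; rewrite card_powerset card_setsW.
  by rewrite leq_exp2l // leqNgt hlt.
case/dinjectivePn => A; rewrite powersetE => sA [B].
rewrite !inE => /andP [nBA sB] hsig.
set D := (A :\: B) :|: (B :\: A).
have hev : forall w, ~~ odd (\sum_(v in D) (e v w : nat)).
  move=> w; rewrite -cardDw.
  have : (w \in sigw A) = (w \in sigw B) by rewrite hsig.
  rewrite !inE.
  set SA := [set v in A | e v w]; set SB := [set v in B | e v w].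
  have -> : [set v in D | e v w] = (SA :|: SB) :\: (SA :&: SB).
    apply/setP => v; rewrite !inE; by case: (v \in A); case: (v \in B); case: (e v w).
  move=> hAB.
  have h1 := cardsUI SA SB.
  have h2 : #|(SA :|: SB) :\: (SA :&: SB)| + #|SA :&: SB| = #|SA :|: SB|.
    rewrite -(cardsID (SA :&: SB) (SA :|: SB)) addnC.
    have -> : (SA :|: SB) :&: (SA :&: SB) = SA :&: SB.
      by apply/setIidPr; apply: subset_trans (subsetIl _ _) (subsetUl _ _).
    by [].
  have : odd (#|SA| + #|SB|) = false by rewrite oddD hAB addbb.
  rewrite -h1 -h2 -addnA addnn oddD odd_double addbF => -> //.
have [v0 v0D] : exists v0, v0 \in D.
  apply/set0Pn; apply: contra nBA => /eqP hD; apply/eqP/setP => v.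
  move/setP: hD => /(_ v); rewrite !inE.
  by case: (v \in A); case: (v \in B).
have DVs : D \subset Vs.
  apply/subsetP => v; rewrite !inE => /orP [] /andP [_ h].
  - exact: (subsetP sA).
  - exact: (subsetP sB).
exists v0; first exact: (subsetP DVs).
move=> X hX.
have [v hv hov] := hodd X hX.
case: (eqVneq v v0) => [ev|nv]; last by exists v; rewrite ?inE ?nv.
subst v.
case: (boolP [exists v in D :\ v0, odd #|X :&: nbhd e v|]).
  case/exists_inP => v; rewrite in_setD1 => /andP [nv vD] ho.
  by exists v => //; rewrite in_setD1 nv (subsetP DVs).
move=> hne; exfalso.
have hsum : \sum_(v in D) #|X :&: nbhd e v| = \sum_(w in X) \sum_(v in D) (e v w : nat).
  under eq_bigr do rewrite cardIN.
  by rewrite exchange_big.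
have : ~~ odd (\sum_(v in D) #|X :&: nbhd e v|).
  by rewrite hsum; apply: even_sum => w _; apply: hev.
rewrite (bigD1 v0) //= oddD hov.
have -> : odd (\sum_(i in D | i != v0) #|X :&: nbhd e i|) = false.
  apply/negbTE; apply: even_sum => v /andP [vD nv].
  apply: contra hne => ho; apply/exists_inP; exists v => //; by rewrite in_setD1 nv.
by [].
Qed.

End S.

Theorem mainTheorem4 (V W : finType) (e : V -> W -> bool) :
  odd_bigraph e ->
  exists V' : {set V}, #|V'| <= #|W| /\ odd_on e V'.
Proof.
move=> H.
suff: forall n (Vs : {set V}), #|Vs| <= n -> odd_on e Vs ->
  exists V' : {set V}, #|V'| <= #|W| /\ odd_on e V'.
  by move=> /(_ #|V| [set: V]); apply => //; rewrite cardsT.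
elim=> [|n IH] Vs hn ho.
  by exists Vs; split => //; apply: leq_trans hn _.
case: (leqP #|Vs| #|W|) => hle; first by exists Vs.
have [v0 v0V ho'] := @step V W e _ hle ho.
apply: (IH (Vs :\ v0)) => //.
by rewrite (cardsD1 v0 Vs) v0V add1n ltnS in hn.
Qed.
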